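(* Let $p\geq 2$ be an integer, and for integers $i\ge 0$ and $0\le r\le p-1$ set \[ \theta(i,r)=\frac{p i^2+(p+2r+2)i+2r+2}{(ip+r+1)(ip+p+r+1)(ip+r+2)(ip+p+r)} . \] Then \[ c_0\!\left(\frac{1}{p}\right)=\frac{p(p-1)(p-2)}{2\pi}\sum_{i\geq 0}\sum_{r=0}^{p-1}\theta(i,r). \]
   Context: For a positive integer $p$ and an integer $q$ with $1\le q\le p-1$ and $\gcd(p,q)=1$, the cotangent sum is $c_0\!\left(\frac{q}{p}\right)=-\sum_{k=1}^{p-1}\frac{k}{p}\cot\frac{\pi k q}{p}$. *)

(* Defs.v *)
From Stdlib Require Import Reals.
Open Scope R_scope.

Definition cot (x : R) : R := cos x / sin x.

Definition c0 (q p : nat) : R :=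
  - sum_f 1 (p - 1) (fun k => (INR k / INR p) * cot (PI * INR k * INR q / INR p)).

Definition theta (p i r : nat) : R :=
  let P := INR p in let I := INR i in let Rr := INR r in
  (P * I ^ 2 + (P + 2 * Rr + 2) * I + 2 * Rr + 2) /
  ((I * P + Rr + 1) * (I * P + P + Rr + 1) * (I * P + Rr + 2) * (I * P + P + Rr)).

Definition theta_row (p i : nat) : R := sum_f_R0 (fun r => theta p i r) (p - 1).

(* Main.v *)
Require Import Defs.
From Stdlib Require Import Reals Lra Lia.
From Coquelicot Require Import Coquelicot.
Open Scope R_scope.


Fixpoint sm (f : nat -> R) (n : nat) : R :=
  match n with O => 0 | S n => sm f n + f n end.

Lemma sm_ext f g n : (forall k, (k < n)%nat -> f k = g k) -> sm f n = sm g n.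
Proof. induction n; simpl; intros H; auto. rewrite IHn, H; auto; intros; apply H; lia. Qed.

Lemma sm_plus f g n : sm (fun k => f k + g k) n = sm f n + sm g n.
Proof. induction n; simpl; [ring|rewrite IHn; ring]. Qed.

Lemma sm_minus f g n : sm (fun k => f k - g k) n = sm f n - sm g n.
Proof. induction n; simpl; [ring|rewrite IHn; ring]. Qed.

Lemma sm_scal c f n : sm (fun k => c * f k) n = c * sm f n.
Proof. induction n; simpl; [ring|rewrite IHn; ring]. Qed.

Lemma sm_add f m n : sm f (m + n) = sm f m + sm (fun k => f (m + k)%nat) n.
Proof. induction n; simpl. rewrite Nat.add_0_r; ring. rewrite Nat.add_succ_r; simpl; rewrite IHn; ring. Qed.

Lemma sm_shift1 f n : sm (fun k => f (S k)) n = sm f n - f O + f n.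
Proof. induction n; simpl. ring. rewrite IHn; ring. Qed.

Lemma sm_peel g m : sm g (S m) = g O + sm (fun k => g (S k)) m.
Proof. induction m; simpl in *. ring. rewrite IHm; ring. Qed.

Lemma sm_rev f n : sm (fun k => f (n - S k)%nat) n = sm f n.
Proof.
  induction n. reflexivity.
  rewrite sm_peel.
  replace (S n - 1)%nat with n by lia.
  transitivity (f n + sm (fun k => f (n - S k)%nat) n).
  { f_equal. }
  rewrite IHn. simpl. ring.
Qed.

Lemma sm_le f g n : (forall k, (k < n)%nat -> f k <= g k) -> sm f n <= sm g n.
Proof. induction n; simpl; intros H. lra. assert (f n <= g n) by (apply H; lia).
  assert (sm f n <= sm g n) by (apply IHn; intros; apply H; lia). lra. Qed.

Lemma sm_abs f n : Rabs (sm f n) <= sm (fun k => Rabs (f k)) n.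
Proof. induction n; simpl. rewrite Rabs_R0; lra.
  eapply Rle_trans. apply Rabs_triang. lra. Qed.

Lemma sm_const c n : sm (fun _ => c) n = INR n * c.
Proof. induction n; simpl sm. simpl; ring. rewrite IHn, S_INR; ring. Qed.

Lemma sm_id1 n : sm (fun k => INR k + 1) n = INR n * (INR n + 1) / 2.
Proof. induction n; simpl sm. simpl; field. rewrite IHn, S_INR; field. Qed.

Lemma sum_f_R0_sm f n : sum_f_R0 f n = sm f (S n).
Proof. induction n. simpl; ring. change (sum_f_R0 f (S n)) with (sum_f_R0 f n + f (S n)). rewrite IHn. reflexivity. Qed.

Lemma sm_swap (F : nat -> nat -> R) M K :
  sm (fun m => sm (fun k => F m k) K) M = sm (fun k => sm (fun m => F m k) M) K.
Proof. induction M; simpl. rewrite sm_const; ring.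
  rewrite IHM, <- sm_plus. reflexivity. Qed.

Lemma cv_const c : Un_cv (fun _ => c) c.
Proof. intros e He; exists O; intros; unfold R_dist; rewrite Rminus_diag, Rabs_R0; lra. Qed.

Lemma sm_cv (g : nat -> nat -> R) (l : nat -> R) K :
  (forall k, (k < K)%nat -> Un_cv (fun n => g k n) (l k)) ->
  Un_cv (fun n => sm (fun k => g k n) K) (sm l K).
Proof. induction K; intros H; simpl. apply cv_const.
  apply CV_plus. apply IHK; intros; apply H; lia. apply H; lia. Qed.

Lemma sm_opp f n : sm (fun k => - f k) n = - sm f n.
Proof. induction n; simpl; [ring|rewrite IHn; ring]. Qed.

Lemma cv_inv_lin a b : 0 < a -> 0 < b -> Un_cv (fun n => / (a * INR n + b)) 0.
Proof.
  intros Ha Hb eps Heps.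
  destruct (archimed_cor1 (eps * a)) as [N [HN HN0]]. nra.
  exists N. intros n Hn. unfold R_dist. rewrite Rminus_0_r.
  assert (HNr : 0 < INR N) by (apply lt_0_INR; lia).
  assert (Hnr : INR N <= INR n) by (apply le_INR; lia).
  assert (Hpos : 0 < a * INR n + b) by nra.
  rewrite Rabs_right by (left; apply Rinv_0_lt_compat; lra).
  apply Rle_lt_trans with (/ (a * INR N)).
  apply Rinv_le_contravar; nra.
  rewrite Rinv_mult. apply Rmult_lt_reg_l with a; auto.
  replace (a * (/ a * / INR N)) with (/ INR N) by (field; lra). lra.
Qed.

Lemma cv_scal c u l : Un_cv u l -> Un_cv (fun n => c * u n) (c * l).
Proof. intros H. apply CV_mult. apply cv_const. exact H. Qed.

Lemma cv_shift u l : Un_cv u l -> Un_cv (fun n => u (S n)) l.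
Proof. intros H eps He. destruct (H eps He) as [N HN]. exists N. intros n Hn. apply HN. lia. Qed.

Lemma cv_ext u v l : (forall n, u n = v n) -> Un_cv v l -> Un_cv u l.
Proof. intros E H eps He. destruct (H eps He) as [N HN]. exists N. intros n Hn. rewrite E. auto. Qed.

Lemma cot_shift t : cot (t + PI) = cot t.
Proof. unfold cot. rewrite neg_cos, neg_sin. unfold Rdiv. rewrite Rinv_opp. ring. Qed.

Lemma cot_opp t : cot (- t) = - cot t.
Proof. unfold cot. rewrite cos_neg, sin_neg. unfold Rdiv. rewrite Rinv_opp. ring. Qed.

Lemma cot_double t : sin (t/2) <> 0 -> cos (t/2) <> 0 ->
  cot t = (cot (t/2) + cot ((t + PI)/2)) / 2.
Proof.
  intros Hs Hc. unfold cot.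
  replace ((t + PI)/2) with (t/2 + PI/2) by field.
  rewrite sin_plus, cos_plus, sin_PI2, cos_PI2.
  replace t with (2 * (t/2)) at 1 2 by field.
  rewrite sin_2a, cos_2a. field. split; auto.
Qed.

Lemma cot_mult K y : 0 < y < PI ->
  cot y = / INR (2^K) * sm (fun j => cot ((y + INR j * PI) / INR (2^K))) (2^K).
Proof.
  intros Hy. induction K.
  { simpl. replace ((y + 0 * PI) / 1) with y by field. field. }
  rewrite IHK at 1. set (M := INR (2^K)).
  assert (HM : 0 < M) by (unfold M; apply lt_0_INR; apply Nat.neq_0_lt_0, Nat.pow_nonzero; lia).
  assert (E : (2 ^ S K = 2^K + 2^K)%nat) by (simpl; lia).
  rewrite E, sm_add, plus_INR. fold M.
  set (g := fun j => cot ((y + INR j * PI) / (M + M))).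
  change (sm (fun j => cot ((y + INR j * PI) / (M + M))) (2^K)) with (sm g (2^K)).
  change (sm (fun k => cot ((y + INR (2^K + k) * PI) / (M + M))) (2^K)) with (sm (fun k => g (2^K + k)%nat) (2^K)).
  rewrite <- sm_plus.
  rewrite (sm_ext _ (fun j => / 2 * (g j + g (2^K + j)%nat))).
  { rewrite sm_scal. field. lra. }
  intros j Hj.
  assert (Hj' : INR j + 1 <= M).
  { rewrite <- S_INR. unfold M. apply le_INR. lia. }
  assert (Hj0 : 0 <= INR j) by apply pos_INR.
  set (v := (y + INR j * PI) / M).
  assert (Hv : 0 < v / 2 < PI / 2).
  { unfold v. split. apply Rmult_lt_0_compat; [|lra]. apply Rdiv_lt_0_compat; [|lra].
     pose proof PI_RGT_0. nra.
     apply Rmult_lt_reg_r with (2 * M). lra.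
     replace ((y + INR j * PI) / M / 2 * (2 * M)) with (y + INR j * PI) by (field; lra).
     replace (PI / 2 * (2 * M)) with (PI * M) by field. nra. }
  rewrite (cot_double v).
  - assert (E1 : g j = cot (v / 2)).
    { unfold g, v. f_equal. field. lra. }
    assert (E2 : g (2^K + j)%nat = cot ((v + PI) / 2)).
    { unfold g, v. rewrite plus_INR. fold M. f_equal. field. lra. }
    rewrite E1, E2. field.
  - apply Rgt_not_eq. apply sin_gt_0; lra.
  - apply Rgt_not_eq. apply cos_gt_0; lra.
Qed.

Lemma cot_sym K y : 0 < y < PI ->
  cot y = / INR (2^(S K)) * (sm (fun m => cot ((y + INR m * PI) / INR (2^(S K)))) (2^K)
                 - sm (fun m => cot (((INR m + 1) * PI - y) / INR (2^(S K)))) (2^K)).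
Proof.
  intros Hy. rewrite (cot_mult (S K) y Hy) at 1.
  set (N := INR (2^(S K))).
  assert (E : (2 ^ S K = 2^K + 2^K)%nat) by (simpl; lia).
  assert (HN : N = 2 * INR (2^K)) by (unfold N; rewrite E, plus_INR; ring).
  assert (HM : 0 < INR (2^K)) by (apply lt_0_INR; apply Nat.neq_0_lt_0, Nat.pow_nonzero; lia).
  rewrite E. rewrite sm_add. f_equal. unfold Rminus. f_equal.
  rewrite <- (sm_rev (fun k => cot ((y + INR (2 ^ K + k) * PI) / N))).
  rewrite <- sm_opp.
  apply sm_ext. intros m Hm.
  transitivity (cot ((- (((INR m + 1) * PI + - y) / N)) + PI)).
  { f_equal. rewrite plus_INR, minus_INR by lia. rewrite S_INR. rewrite HN. field. lra. }
  rewrite cot_shift, cot_opp. reflexivity.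
Qed.

Lemma sin_lb3 a : 0 <= a <= PI -> a - a^3/6 <= sin a.
Proof.
  intros H. destruct (sin_bound a 0) as [H1 _]; try lra.
  replace (a - a^3/6) with (sin_approx a (2*0+1)); auto.
  unfold sin_approx, sin_term. simpl. field.
Qed.

Definition fl (t : R) : R := cot t - / t.

Lemma fl_deriv c : 0 < c < PI ->
  derivable_pt_lim fl c (/ c^2 - / (sin c)^2).
Proof.
  intros Hc. assert (Hs : 0 < sin c) by (apply sin_gt_0; lra).
  apply is_derive_Reals. unfold fl, cot.
  auto_derive.
  - repeat split; lra.
  - pose proof (sin2_cos2 c) as E. unfold Rsqr in E. field_simplify; try lra.
    replace (cos c ^ 2) with (1 - sin c ^2) by (simpl; lra). field. lra.
Qed.

Lemma PI_gt3 : 3 < PI.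
Proof. pose proof PI2_3_2. lra. Qed.

Lemma fl_dbound c : 0 < c <= 2 -> Rabs (/ c^2 - / (sin c)^2) <= 3.
Proof.
  intros Hc. pose proof PI_gt3.
  set (s := sin c).
  assert (Hs1 : s < c) by (apply sin_lt_x; lra).
  assert (Hs2 : c - c^3/6 <= s) by (apply sin_lb3; lra).
  set (t := c - c^3/6) in *.
  assert (Ht : c/3 <= t) by (unfold t; nra).
  assert (Hs0 : 0 < s) by lra.
  assert (Hst : t^2 <= s^2) by nra.
  assert (Hct : c^2 - t^2 <= c^4/3) by (unfold t; nra).
  assert (Ht2 : (c/3)^2 <= t^2) by nra.
  assert (Hct2 : c^4/3 <= 3 * c^2 * t^2).
  { replace (c^4/3) with (3 * c^2 * (c/3)^2) by field.
    apply Rmult_le_compat_l; [nra|exact Ht2]. }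
  assert (H1 : / c^2 <= / s^2).
  { apply Rinv_le_contravar. nra. nra. }
  assert (H2 : / s^2 - / c^2 <= 3).
  { replace (/ s^2 - / c^2) with ((c^2 - s^2) / (c^2 * s^2)) by (field; lra).
    apply Rle_trans with (3 * (c^2*s^2) / (c^2 * s^2)).
    apply Rmult_le_compat_r. left; apply Rinv_0_lt_compat; nra. nra.
    right; field; lra. }
  rewrite Rabs_left1; lra.
Qed.

Lemma fl_lip a b : 0 < a <= 2 -> 0 < b <= 2 -> Rabs (fl a - fl b) <= 3 * Rabs (a - b).
Proof.
  intros Ha Hb. pose proof PI_gt3.
  assert (gen : forall u v, 0 < u <= 2 -> 0 < v <= 2 -> u < v -> Rabs (fl v - fl u) <= 3 * (v - u)).
  { intros u v Hu Hv Huv.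
    destruct (MVT_cor2 fl (fun c => / c^2 - / (sin c)^2) u v Huv) as [c [Ec Hc]].
    { intros c Hc. apply fl_deriv. lra. }
    rewrite Ec, Rabs_mult, (Rabs_right (v - u)) by lra.
    apply Rmult_le_compat_r. lra. apply fl_dbound. lra. }
  destruct (Rtotal_order a b) as [Hab|[Hab|Hab]].
  - rewrite Rabs_minus_sym, (Rabs_minus_sym a b), (Rabs_right (b - a)) by lra. apply gen; lra.
  - subst. rewrite !Rminus_diag, Rabs_R0. lra.
  - rewrite (Rabs_right (a - b)) by lra. apply gen; lra.
Qed.

Lemma cot_err K y : 0 < y < PI ->
  Rabs (cot y - sm (fun m => / (y + INR m * PI) - / ((INR m + 1) * PI - y)) (2^K))
   <= 3 * PI / (4 * INR (2^K)).
Proof.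
  intros Hy. rewrite (cot_sym K y Hy).
  set (I := (2^K)%nat). set (N := INR (2^(S K))).
  assert (E : (2 ^ S K = 2^K + 2^K)%nat) by (simpl; lia).
  assert (HN : N = 2 * INR I) by (unfold N, I; rewrite E, plus_INR; ring).
  assert (HM : 0 < INR I) by (apply lt_0_INR; apply Nat.neq_0_lt_0, Nat.pow_nonzero; lia).
  pose proof PI_gt3. pose proof PI_4.
  rewrite <- sm_minus, <- sm_scal, <- sm_minus.
  rewrite (sm_ext _ (fun m => / N * (fl ((y + INR m * PI) / N) - fl (((INR m + 1) * PI - y) / N)))).
  2:{ intros m Hm. assert (0 <= INR m) by apply pos_INR.
      unfold fl. field. repeat split; nra. }
  eapply Rle_trans. apply sm_abs.
  eapply Rle_trans. apply (sm_le _ (fun _ => / N * (3 * (PI / N)))).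
  { intros m Hm. assert (0 <= INR m) by apply pos_INR.
    assert (Hm' : INR m + 1 <= INR I) by (rewrite <- S_INR; apply le_INR; lia).
    rewrite Rabs_mult, Rabs_right by (left; apply Rinv_0_lt_compat; lra).
    apply Rmult_le_compat_l. left; apply Rinv_0_lt_compat; lra.
    eapply Rle_trans. apply fl_lip.
    - split. apply Rdiv_lt_0_compat; nra.
      apply Rmult_le_reg_r with N; [lra|]. unfold Rdiv. rewrite Rmult_assoc, Rinv_l by lra. nra.
    - split. apply Rdiv_lt_0_compat; nra.
      apply Rmult_le_reg_r with N; [lra|]. unfold Rdiv. rewrite Rmult_assoc, Rinv_l by lra. nra.
    - apply Rmult_le_compat_l. lra.
      replace ((y + INR m * PI) / N - ((INR m + 1) * PI - y) / N) with ((2*y - PI)/N) by (field; lra).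
      unfold Rdiv. rewrite Rabs_mult, (Rabs_right (/N)) by (left; apply Rinv_0_lt_compat; lra).
      apply Rmult_le_compat_r. left; apply Rinv_0_lt_compat; lra.
      apply Rabs_le; lra. }
  rewrite sm_const. rewrite HN. right. field. lra.
Qed.

Definition Tx (x : R) (I : nat) : R := sm (fun m => / (INR m + x) - / (INR m + 1 - x)) I.

Lemma pow2_ge n : (n <= 2^n)%nat.
Proof. induction n; simpl. lia. pose proof (Nat.pow_nonzero 2 n). lia. Qed.

Lemma term_bound x m : 0 < x < 1 -> (1 <= m)%nat ->
  Rabs (/ (INR m + x) - / (INR m + 1 - x)) <= / INR m - / (INR m + 1).
Proof.
  intros Hx Hm. assert (H1 : 1 <= INR m) by (apply (le_INR 1); lia).
  replace (/ (INR m + x) - / (INR m + 1 - x)) with ((1 - 2*x) / ((INR m + x) * (INR m + 1 - x))) by (field; lra).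
  replace (/ INR m - / (INR m + 1)) with (1 / (INR m * (INR m + 1))) by (field; lra).
  unfold Rdiv. rewrite Rabs_mult, (Rabs_right (/ _)) by (left; apply Rinv_0_lt_compat; nra).
  apply Rmult_le_compat. apply Rabs_pos. left; apply Rinv_0_lt_compat; nra.
  apply Rabs_le; lra. apply Rinv_le_contravar; nra.
Qed.

Lemma Tx_tail x I n : 0 < x < 1 -> (1 <= I)%nat -> Rabs (Tx x (I + n) - Tx x I) <= / INR I.
Proof.
  intros Hx HI. unfold Tx. rewrite sm_add.
  replace (sm (fun m => / (INR m + x) - / (INR m + 1 - x)) I +
     sm (fun k => / (INR (I + k) + x) - / (INR (I + k) + 1 - x)) n -
     sm (fun m => / (INR m + x) - / (INR m + 1 - x)) I)
   with (sm (fun k => / (INR (I + k) + x) - / (INR (I + k) + 1 - x)) n) by ring.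
  eapply Rle_trans. apply sm_abs.
  eapply Rle_trans. apply (sm_le _ (fun k => / INR (I + k) - / INR (I + S k))).
  { intros k Hk. rewrite (Nat.add_succ_r I k), S_INR. apply term_bound; auto. lia. }
  assert (tel : forall n, sm (fun k => / INR (I + k) - / INR (I + S k)) n = / INR I - / INR (I + n)).
  { induction n0; simpl sm. rewrite Nat.add_0_r; ring. rewrite IHn0; ring. }
  rewrite tel. assert (0 < INR (I + n)) by (apply lt_0_INR; lia).
  assert (0 < / INR (I+n)) by (apply Rinv_0_lt_compat; lra). lra.
Qed.

Lemma Tx_cv x : 0 < x < 1 -> Un_cv (Tx x) (PI * cot (PI * x)).
Proof.
  intros Hx. pose proof PI_gt3 as HPI.
  set (y := PI * x). assert (Hy : 0 < y < PI) by (unfold y; split; nra).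
  assert (Erel : forall I, Tx x I = PI * sm (fun m => / (y + INR m * PI) - / ((INR m + 1) * PI - y)) I).
  { intros I. unfold Tx. rewrite <- sm_scal. apply sm_ext. intros m _.
    assert (0 <= INR m) by apply pos_INR. unfold y. field. repeat split; nra. }
  intros eps Heps.
  set (C := 1 + PI * (3 * PI / 4)).
  assert (HC : 0 < C) by (unfold C; nra).
  destruct (archimed_cor1 (eps / C)) as [n0 [Hn0 Hn0p]].
  { apply Rdiv_lt_0_compat; lra. }
  exists (2 ^ n0)%nat. intros n Hn. unfold R_dist.
  set (I := (2^n0)%nat) in *.
  assert (HI1 : (n0 <= I)%nat) by apply pow2_ge.
  assert (HIn0 : 0 < INR n0) by (apply lt_0_INR; lia).
  assert (HIpos : 0 < INR I) by (apply lt_0_INR; lia).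
  assert (Hinv : / INR I <= / INR n0) by (apply Rinv_le_contravar; [lra|apply le_INR; lia]).
  replace n with (I + (n - I))%nat by lia.
  replace (Tx x (I + (n - I)) - PI * cot y) with
    ((Tx x (I + (n - I)) - Tx x I) + (Tx x I - PI * cot y)) by ring.
  eapply Rle_lt_trans. apply Rabs_triang.
  assert (H1 : Rabs (Tx x (I + (n - I)) - Tx x I) <= / INR I) by (apply Tx_tail; auto; lia).
  assert (H2 : Rabs (Tx x I - PI * cot y) <= PI * (3 * PI / (4 * INR I))).
  { rewrite Erel. rewrite Rabs_minus_sym.
    replace (PI * cot y - PI * sm (fun m => / (y + INR m * PI) - / ((INR m + 1) * PI - y)) I)
      with (PI * (cot y - sm (fun m => / (y + INR m * PI) - / ((INR m + 1) * PI - y)) I)) by ring.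
    rewrite Rabs_mult, Rabs_right by lra. apply Rmult_le_compat_l. lra.
    apply cot_err; auto. }
  assert (H3 : PI * (3 * PI / (4 * INR I)) = (PI * (3 * PI / 4)) * / INR I) by (field; lra).
  assert (H4 : C * / INR n0 < eps).
  { apply Rmult_lt_reg_l with (/ C). apply Rinv_0_lt_compat; lra.
    replace (/ C * (C * / INR n0)) with (/ INR n0) by (field; lra).
    replace (/ C * eps) with (eps / C) by (unfold Rdiv; ring). lra. }
  rewrite H3 in H2. unfold C in H4.
  set (k := PI * (3 * PI / 4)) in *. set (a := / INR I) in *. set (b := / INR n0) in *.
  assert (0 < k) by (unfold k; nra).
  assert (k * a <= k * b) by (apply Rmult_le_compat_l; lra).
  assert ((1 + k) * b = b + k * b) by ring.
  lra.
Qed.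

Section Blk.
Variable p1 : nat.
Hypothesis Hp1 : (2 <= p1)%nat.
Let p := S p1.
Let P := INR p.

Lemma P_ge3 : 3 <= P.
Proof. unfold P, p. replace 3 with (INR 3) by (simpl; ring). apply le_INR. lia. Qed.

Definition Gf (I s : nat) : R := / (INR I * P + INR s + 1).
Definition Af (I : nat) : R := sm (Gf I) p.
Definition ell (I : nat) : R :=
  sm (fun k => (INR k + 1) * (/ (INR I * P + INR k + 1) - / (INR I * P + P - INR k - 1))) p1.
Definition Rr (I : nat) : R :=
  (P - 1) / (P * (INR I * P + 1)) + 2 / (P * (INR I + 1))
  - 2 / P^2 * sm (fun t => (INR t + 1)^2 * Gf I t) p.

Lemma Gpos I s : 0 < INR I * P + INR s + 1.
Proof. pose proof P_ge3. pose proof (pos_INR I). pose proof (pos_INR s). nra. Qed.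

Lemma theta_pf I r :
  (P - 1) * (P - 2) * theta p I r =
  (P - 2) * (- (INR I * (INR I + 1)) * / (INR I * P + INR r + 1)
             + (INR I + 1) * (INR I + 2) * / (INR I * P + INR r + P + 1))
  + (INR I + 1) * (INR I * P + 2) * / (INR I * P + INR r + 2)
  + (INR I + 1) * (2 - 2 * P - INR I * P) * / (INR I * P + INR r + P).
Proof.
  pose proof P_ge3. pose proof (pos_INR I). pose proof (pos_INR r).
  unfold theta. fold P. field. repeat split; nra.
Qed.

Lemma GS I s : Gf (S I) s = Gf I (p + s).
Proof. unfold Gf. f_equal. rewrite S_INR, plus_INR. fold P. ring. Qed.

Lemma row_id I :
  (P - 1) * (P - 2) * theta_row p I =
  (P - 2) * (- (INR I * (INR I + 1)) * Af I + (INR I + 1) * (INR I + 2) * Af (S I))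
  + (INR I + 1) * (INR I * P + 2) * (Af I - Gf I 0 + Gf I p)
  + (INR I + 1) * (2 - 2 * P - INR I * P) * (Af (S I) + Gf I p1 - Gf I (p1 + p)).
Proof.
  unfold theta_row. replace (p - 1)%nat with p1 by (unfold p; lia).
  rewrite sum_f_R0_sm. fold p.
  rewrite <- sm_scal. rewrite (sm_ext _ _ _ (fun r _ => theta_pf I r)).
  rewrite !sm_plus, !sm_scal.
  assert (S1 : sm (fun r => / (INR I * P + INR r + 1)) p = Af I) by reflexivity.
  assert (S2 : sm (fun r => / (INR I * P + INR r + P + 1)) p = Af (S I)).
  { unfold Af. apply sm_ext. intros k _. rewrite GS. unfold Gf. f_equal. rewrite plus_INR. fold P. ring. }
  assert (S3 : sm (fun r => / (INR I * P + INR r + 2)) p = Af I - Gf I 0 + Gf I p).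
  { unfold Af. rewrite <- sm_shift1. apply sm_ext. intros k _. unfold Gf. f_equal. rewrite S_INR. ring. }
  assert (S4 : sm (fun r => / (INR I * P + INR r + P)) p = Af (S I) + Gf I p1 - Gf I (p1 + p)).
  { transitivity (sm (fun r => Gf I (p1 + r)) p).
    { apply sm_ext. intros k _. unfold Gf. f_equal. rewrite plus_INR. unfold P, p. rewrite S_INR. ring. }
    assert (E1 := sm_add (Gf I) p1 p).
    assert (E2 := sm_add (Gf I) p p).
    assert (E3 : sm (Gf I) (p + p) = sm (Gf I) (p1 + p) + Gf I (p1 + p)).
    { replace (p + p)%nat with (S (p1 + p)) by (unfold p; lia). reflexivity. }
    assert (E4 : sm (Gf I) p = sm (Gf I) p1 + Gf I p1) by reflexivity.
    assert (E5 : sm (fun k => Gf I (p + k)) p = Af (S I)).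
    { unfold Af. apply sm_ext. intros k _. rewrite GS. reflexivity. }
    unfold Af in *. lra. }
  rewrite S3, S4, sm_plus, !sm_scal, S1, S2. reflexivity.
Qed.

Lemma INRp1 : INR p1 = P - 1.
Proof. unfold P, p. rewrite S_INR. ring. Qed.

Lemma smG_p1 I : sm (Gf I) p1 = Af I - Gf I p1.
Proof. unfold Af, p. simpl. ring. Qed.

Lemma ell_conv I : ell I = 2 * (P - 1) - (2 * INR I * P + P) * (Af I - Gf I p1).
Proof.
  pose proof P_ge3. pose proof (pos_INR I).
  unfold ell.
  rewrite (sm_ext _ (fun k => ((INR k + 1) * / (INR I * P + INR k + 1)) - ((INR k + 1) * / (INR I * P + P - INR k - 1)))) by (intros; ring).
  rewrite sm_minus.
  assert (F1 : sm (fun k => (INR k + 1) * / (INR I * P + INR k + 1)) p1 = INR p1 - INR I * P * sm (Gf I) p1).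
  { rewrite <- sm_scal, <- (Rmult_1_r (INR p1)), <- (sm_const 1 p1), <- sm_minus. apply sm_ext. intros k _.
    pose proof (Gpos I k). unfold Gf. field. lra. }
  assert (F2 : sm (fun k => (INR k + 1) * / (INR I * P + P - INR k - 1)) p1 = (INR I * P + P) * sm (Gf I) p1 - INR p1).
  { rewrite <- sm_rev. rewrite <- sm_scal, <- (Rmult_1_r (INR p1)), <- (sm_const 1 p1), <- sm_minus. apply sm_ext. intros k Hk.
    pose proof (Gpos I k). rewrite minus_INR by lia. rewrite S_INR, INRp1. unfold Gf.
    replace (INR I * P + P - (P - 1 - (INR k + 1)) - 1) with (INR I * P + INR k + 1) by ring.
    field. lra. }
  rewrite F1, F2, smG_p1, INRp1. ring.
Qed.

Lemma sq_conv I : sm (fun t => (INR t + 1)^2 * Gf I t) p = P * (P + 1) / 2 - INR I * P^2 + (INR I * P)^2 * Af I.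
Proof.
  unfold Af. rewrite (sm_ext _ (fun t => (INR t + 1) - INR I * P + (INR I * P)^2 * Gf I t)).
  - rewrite sm_plus, sm_minus, sm_id1, sm_const, sm_scal. fold P. ring.
  - intros t _. pose proof (Gpos I t). unfold Gf. field. lra.
Qed.

Lemma block_id I :
  (P - 1) * (P - 2) * theta_row p I + 2 / P * ell I = Rr (S I) - Rr I.
Proof.
  pose proof P_ge3. pose proof (pos_INR I).
  rewrite row_id, ell_conv. unfold Rr. rewrite !sq_conv.
  assert (AS : Af (S I) = sm (fun t => Gf I (p + t)) p) by (unfold Af; apply sm_ext; intros; apply GS).
  unfold Gf. rewrite !S_INR, !plus_INR, INRp1. fold P.
  change (INR 0) with 0. set (A := Af I). set (B := Af (S I)). clearbody P. field. repeat split; nra.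
Qed.

Lemma Rr0 : Rr 0 = 0.
Proof. pose proof P_ge3. unfold Rr. rewrite sq_conv. change (INR 0) with 0. clearbody P. field. lra. Qed.

Lemma partial_id I :
  (P - 1) * (P - 2) * sm (theta_row p) I + 2 / P * sm ell I = Rr I.
Proof.
  induction I. simpl. rewrite Rr0. ring.
  simpl sm.
  transitivity (((P - 1) * (P - 2) * sm (theta_row p) I + 2 / P * sm ell I)
     + ((P - 1) * (P - 2) * theta_row p I + 2 / P * ell I)). ring.
  rewrite IHI, block_id. ring.
Qed.

Lemma Rr_cv : Un_cv Rr 0.
Proof.
  pose proof P_ge3.
  assert (E : forall I, Rr I = (P - 1) / P * / (P * INR I + 1) + 2 / P * / (1 * INR I + 1)
        - 2 / P^2 * sm (fun t => (INR t + 1)^2 * / (P * INR I + (INR t + 1))) p).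
  { intros I. unfold Rr, Gf. f_equal. f_equal.
    - field. pose proof (pos_INR I). split; nra.
    - field. pose proof (pos_INR I). split; nra.
    - f_equal. apply sm_ext. intros t _. f_equal. f_equal. ring. }
  apply (cv_ext _ _ _ E).
  replace 0 with ((P - 1) / P * 0 + 2 / P * 0 - 2 / P^2 * sm (fun t => (INR t + 1)^2 * 0) p).
  2:{ rewrite (sm_ext _ (fun _ => 0)) by (intros; ring). rewrite sm_const. ring. }
  apply CV_minus. apply CV_plus.
  - apply cv_scal. apply cv_inv_lin; lra.
  - apply cv_scal. apply cv_inv_lin; lra.
  - apply cv_scal. apply sm_cv. intros t _. apply cv_scal. apply cv_inv_lin. lra.
    pose proof (pos_INR t). lra.
Qed.
End Blk.

Lemma theta_row2 i : theta_row 2 i =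
  / (2 * (2 * INR i + 1) * (2 * INR i + 3)) + / (2 * (2 * INR i + 3)^2).
Proof.
  pose proof (pos_INR i).
  unfold theta_row, theta. simpl sum_f_R0. replace (INR 2) with 2 by (simpl; ring).
  change (INR 0) with 0. change (INR 1) with 1. field. repeat split; nra.
Qed.

Lemma theta_row2_bounds i : 0 <= theta_row 2 i <= / 2 * (/ (2 * INR i + 1) - / (2 * INR i + 3)).
Proof.
  pose proof (pos_INR i). rewrite theta_row2.
  assert (H1 : 0 < / (2 * (2 * INR i + 1) * (2 * INR i + 3))) by (apply Rinv_0_lt_compat; nra).
  assert (H2 : 0 < / (2 * (2 * INR i + 3)^2)) by (apply Rinv_0_lt_compat; nra).
  assert (H3 : / (2 * (2 * INR i + 3)^2) <= / (2 * (2 * INR i + 1) * (2 * INR i + 3))).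
  { apply Rinv_le_contravar; nra. }
  assert (H4 : / 2 * (/ (2 * INR i + 1) - / (2 * INR i + 3)) = 2 * / (2 * (2 * INR i + 1) * (2 * INR i + 3))).
  { field. nra. }
  lra.
Qed.

Lemma case2 : exists S : R,
    infinite_sum (fun i => theta_row 2 i) S /\
    c0 1 2 = INR 2 * (INR 2 - 1) * (INR 2 - 2) / (2 * PI) * S.
Proof.
  set (u := fun N => sum_f_R0 (fun i => theta_row 2 i) N).
  assert (Hg : Un_growing u).
  { intros n. unfold u. simpl. pose proof (theta_row2_bounds (S n)). lra. }
  assert (Hb : forall n, u n <= / 2 - / (2 * (2 * INR n + 3))).
  { induction n; unfold u in *; simpl sum_f_R0.
    - pose proof (theta_row2_bounds 0). simpl INR in *.
      replace (/ 2 - / (2 * (2 * 0 + 3))) with (/ 2 * (/ (2 * 0 + 1) - / (2 * 0 + 3))) by field. lra.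
    - pose proof (theta_row2_bounds (S n)). rewrite S_INR in *. pose proof (pos_INR n).
      replace (/ 2 - / (2 * (2 * (INR n + 1) + 3))) with
        (/ 2 - / (2 * (2 * INR n + 3)) + / 2 * (/ (2 * (INR n + 1) + 1) - / (2 * (INR n + 1) + 3))).
      lra. field. nra. }
  destruct (growing_cv u Hg) as [S HS].
  { exists (/2). intros x [n ->]. pose proof (Hb n). pose proof (pos_INR n).
    assert (0 < / (2 * (2 * INR n + 3))) by (apply Rinv_0_lt_compat; nra). lra. }
  exists S. split. exact HS.
  unfold c0, sum_f. simpl. unfold cot.
  replace (PI * 1 * 1 / (1 + 1)) with (PI / 2) by field.
  rewrite cos_PI2, sin_PI2. field. pose proof PI_RGT_0; lra.
Qed.

Lemma case3 p1 : (2 <= p1)%nat -> exists S0 : R,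
    infinite_sum (fun i => theta_row (S p1) i) S0 /\
    c0 1 (S p1) = INR (S p1) * (INR (S p1) - 1) * (INR (S p1) - 2) / (2 * PI) * S0.
Proof.
  intros Hp1.
  pose proof (P_ge3 p1 Hp1) as HP. set (P := INR (S p1)) in *.
  assert (HPp : P = INR p1 + 1) by (unfold P; apply S_INR).
  pose proof PI_gt3 as HPI.
  set (Lstar := sm (fun k => (INR k + 1) / P * (PI * cot (PI * ((INR k + 1) / P)))) p1).
  assert (HL : Un_cv (fun I => sm (ell p1) I) Lstar).
  { apply (cv_ext _ (fun I => sm (fun k => (INR k + 1) / P * Tx ((INR k + 1) / P) I) p1)).
    { intros I. unfold ell. rewrite sm_swap. apply sm_ext. intros k Hk.
      unfold Tx. rewrite <- sm_scal. apply sm_ext. intros m _.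
      assert (Hk' : INR k + 1 <= INR p1) by (rewrite <- S_INR; apply le_INR; lia).
      pose proof (pos_INR k). pose proof (pos_INR m). fold P.
      field. repeat split; nra. }
    apply sm_cv. intros k Hk. apply cv_scal. apply Tx_cv.
    assert (Hk' : INR k + 1 <= INR p1) by (rewrite <- S_INR; apply le_INR; lia).
    pose proof (pos_INR k). split.
    apply Rdiv_lt_0_compat; lra.
    apply Rmult_lt_reg_r with P. lra. unfold Rdiv. rewrite Rmult_assoc, Rinv_l by lra. lra. }
  set (Sv := (0 - 2 / P * Lstar) * / ((P - 1) * (P - 2))).
  exists Sv. split.
  - unfold infinite_sum.
    apply (cv_ext _ (fun N => sm (theta_row (S p1)) (S N))).
    { intros N. apply sum_f_R0_sm. }
    apply cv_shift.
    apply (cv_ext _ (fun I => (Rr p1 I - 2 / P * sm (ell p1) I) * / ((P - 1) * (P - 2)))).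
    { intros I. rewrite <- (partial_id p1 Hp1 I). fold P. field. split; lra. }
    unfold Sv. apply CV_mult. apply CV_minus. apply Rr_cv; auto. apply cv_scal; auto. apply cv_const.
  - unfold c0, sum_f. replace (S p1 - 1)%nat with p1 by lia.
    rewrite sum_f_R0_sm. replace (S (p1 - 1)) with p1 by lia. fold P.
    set (g := fun k => (INR k + 1) / P * cot (PI * ((INR k + 1) / P))).
    assert (E1 : Lstar = PI * sm g p1).
    { unfold Lstar, g. rewrite <- sm_scal. apply sm_ext. intros; ring. }
    assert (E2 : sm (fun x => INR (x + 1) / P * cot (PI * INR (x + 1) * INR 1 / P)) p1 = sm g p1).
    { apply sm_ext. intros k _. unfold g. rewrite plus_INR. change (INR 1) with 1. f_equal. f_equal. field. lra. }
    rewrite E2. unfold Sv. rewrite E1. field. repeat split; lra.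
Qed.

Theorem proposition2p2 (p : nat) (hp : (2 <= p)%nat) :
  exists S : R,
    infinite_sum (fun i => theta_row p i) S /\
    c0 1 p = INR p * (INR p - 1) * (INR p - 2) / (2 * PI) * S.
Proof.
  destruct p as [|p1]. lia.
  destruct (Nat.eq_dec p1 1) as [->|Hne]. apply case2.
  apply case3. lia.
Qed.
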